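(* Let $(G,k)$ be an instance of PITVD, let $S\subseteq V(G)$ be such that $G-S$ is a simple (prop-int, tree)-graph, let $V_1$ be the set of vertices of the connected components of $G-S$ that contain a cycle, and fix a clique partition $\mathcal{K}$ of $G[V_1]$ obtained from a proper interval ordering. Let $C$ be a connected component of $G[V_1]$ and $\mathcal{K}_C$ the set of cliques of $\mathcal{K}$ contained in $C$. If a vertex $v\in S$ is adjacent to a vertex of each of at least $6k+5$ distinct cliques of $\mathcal{K}_C$, then $(G,k)$ is a yes-instance of PITVD if and only if $(G-v,k-1)$ is a yes-instance of PITVD.
   Context: PITVD: the input is an undirected multigraph $G$ (no self-loops) and an integer $k$; the question is whether there exists $X\subseteq V(G)$ with $|X|\le k$ such that $G-X$ is a simple graph and every connected component of $G-X$ is a proper interval graph or a tree. A simple graph is a (prop-int, tree)-graph if each component is a proper interval graph or a tree. A proper interval graph has a representation by closed unit-length intervals $I_u=[\mathrm{lp}_u,\mathrm{rp}_u]$, adjacency meaning intersection; a proper interval ordering is an ordering $v_1,\dots,v_n$ of the vertices with $\mathrm{lp}_{v_1}<\dots<\mathrm{lp}_{v_n}$. The clique partition from such an ordering is built greedily: $K_1$ consists of $v_1$ and all vertices $v_i$ whose left endpoint lies in $I_{v_1}$ (a prefix $v_1,\dots,v_i$ of the ordering); remove $K_1$ and repeat on the remaining ordered vertices to get $K_2$, and so on, giving the sequence $\mathcal{K}=(K_1,\dots,K_t)$. *)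

(* Defs.v *)
From mathcomp Require Import all_boot all_order all_algebra.
From Stdlib Require Import ClassicalEpsilon.
Set Implicit Arguments. Unset Strict Implicit. Unset Printing Implicit Defensive.
Import Order.TTheory GRing.Theory Num.Theory.

(* A multigraph G is given by a vertex set V : {set T} over a finite type T and an
   edge-multiplicity function m : T -> T -> nat (symmetric, no self-loops).
   G - X is the multigraph (V :\: X, m), i.e. the induced sub-multigraph on V :\: X.
   All notions below are relative to a vertex set A (the induced subgraph G[A]). *)

Definition asbool (P : Prop) : bool :=
  if excluded_middle_informative P then true else false.

Section Graphs.
Variable T : finType.
Implicit Types (m : T -> T -> nat) (A C : {set T}).

Definition adj m (x y : T) : bool := 0 < m x y.

Definition simple_on A m : Prop := forall x y, x \in A -> y \in A -> m x y <= 1.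

Definition rel_on A m : rel T := fun x y => [&& x \in A, y \in A & adj m x y].

Definition comp A m (x : T) : {set T} := [set y | connect (rel_on A m) x y].

Definition is_component A m C : Prop := exists2 x, x \in A & C = comp A m x.

Definition connected_on C m : Prop :=
  forall x y, x \in C -> y \in C -> connect (rel_on C m) x y.

Definition has_cycle C m : Prop :=
  exists s : seq T, [/\ 3 <= size s, uniq s, all (fun x => x \in C) s
                      & path.cycle (adj m) s].

Definition tree_on C m : Prop := C != set0 /\ connected_on C m /\ ~ has_cycle C m.

(* unit interval representation of G[C]: closed intervals [lp u, lp u + 1];
   two of them intersect iff |lp u - lp w| <= 1 *)
Definition unit_interval_rep C m (lp : T -> rat) : Prop :=
  forall x y, x \in C -> y \in C -> x != y ->
    (adj m x y <-> (`|lp x - lp y| <= 1)%R).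

Definition proper_interval_on C m : Prop := exists lp, unit_interval_rep C m lp.

Definition propint_tree_graph A m : Prop :=
  simple_on A m /\
  forall C, is_component A m C -> proper_interval_on C m \/ tree_on C m.

Definition PITVD (V : {set T}) m (k : int) : Prop :=
  exists X : {set T}, [/\ X \subset V, (#|X|%:Z <= k)%R &
                         propint_tree_graph (V :\: X) m].

Definition cyclic_part A m : {set T} :=
  [set x in A | asbool (has_cycle (comp A m x) m)].

(* greedy clique partition from the proper interval ordering given by the left
   endpoints lp (restricted to the remaining vertices R): the first clique consists
   of the vertex v1 with the smallest left endpoint and all u with
   lp u \in [lp v1, lp v1 + 1], i.e. all u in R with lp u <= lp w + 1 for all w in R. *)
Fixpoint greedy_cliques (n : nat) (lp : T -> rat) (R : {set T}) : seq {set T} :=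
  match n with
  | 0 => [::]
  | n'.+1 =>
      if R == set0 then [::] else
      let K := [set u in R | [forall w in R, (lp u <= lp w + 1)%R]] in
      K :: greedy_cliques n' lp (R :\: K)
  end.

Definition clique_partition (lp : T -> rat) (A : {set T}) : seq {set T} :=
  greedy_cliques #|T| lp A.

End Graphs.

(* Main.v *)
Require Import Defs.
From mathcomp Require Import all_boot all_order all_algebra.
From mathcomp Require Import zify lra.
Import Order.TTheory GRing.Theory Num.Theory.
Set Implicit Arguments. Unset Strict Implicit. Unset Printing Implicit Defensive.

Section Greedy.
Variable T : finType.
Variable lp : T -> rat.

Definition headK (R : {set T}) : {set T} :=
  [set u in R | [forall w in R, (lp u <= lp w + 1)%R]].

Lemma greedy_sub n (R : {set T}) K : K \in greedy_cliques n lp R -> K \subset R.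
Proof.
elim: n R => [|n IH] R //=.
case: ifP => // _; rewrite inE => /orP[/eqP->|/IH].
  by apply/subsetP=> u; rewrite inE => /andP[].
by move/subset_trans; apply; apply: subsetDl.
Qed.

Lemma headA (R : {set T}) x y : x \in headK R -> y \in R -> y \notin headK R -> (lp x < lp y)%R.
Proof.
rewrite !inE => /andP[_ /forallP Hx] yR.
rewrite yR /= => /forallPn[w]; rewrite negb_imply => /andP[wR].
rewrite -ltNge => hw.
have := Hx w; rewrite wR /= => hx.
exact: (le_lt_trans hx hw).
Qed.

Lemma headB (R : {set T}) y : y \in R -> y \notin headK R -> exists2 w, w \in R & (lp w + 1 < lp y)%R.
Proof.
rewrite !inE => yR; rewrite yR /= => /forallPn[w]; rewrite negb_imply => /andP[wR].
by rewrite -ltNge => hw; exists w.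
Qed.

Lemma greedy_ord n (R : {set T}) i j x y :
  (i < j)%N -> (j < size (greedy_cliques n lp R))%N ->
  x \in nth set0 (greedy_cliques n lp R) i ->
  y \in nth set0 (greedy_cliques n lp R) j ->
  (lp x < lp y)%R /\ ((i.+1 < j)%N -> (lp x + 1 < lp y)%R).
Proof.
elim: n R i j => [|n IH] R i j //=.
case: ifP => [_ //|R0].
case: j => [//|j]; case: i => [|i] /=; last first.
  by rewrite !ltnS => hij hj hx hy; exact: (IH _ i j hij hj hx hy).
move=> _ hj hx hy.
have hyR : y \in R :\: headK R.
  exact: (subsetP (greedy_sub (mem_nth set0 hj)) y hy).
move: (hyR); rewrite inE => /andP[hyK hyR'].
have lxy := headA hx hyR' hyK.
split=> // hj2.
case: j hj2 hj hy => [//|j] _.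
case: n IH => [|n'] IH //=.
case: ifP => [_ //|_] /= hj hy.
set R' := R :\: headK R in hy *.
have hyR2 : y \in R' :\: headK R'.
  exact: (subsetP (greedy_sub (mem_nth set0 hj)) y hy).
move: hyR2; rewrite inE => /andP[hyK' hyR2].
have [w wR' hw] := headB hyR2 hyK'.
move: (wR'); rewrite inE => /andP[wK wR].
have := headA hx wR wK.
move=> h; apply: lt_trans hw; by rewrite ltrD2r.
Qed.
End Greedy.


Section Paths.
Variable T : finType.
Variable m : T -> T -> nat.
Hypothesis m_sym : forall x y, m x y = m y x.

Lemma rel_on_sym (B : {set T}) : symmetric (rel_on B m).
Proof. by move=> x y; rewrite /rel_on /adj m_sym; case: (x \in B); case: (y \in B). Qed.

Lemma path_in (B : {set T}) x p : path (rel_on B m) x p -> all (fun z => z \in B) p.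
Proof.
elim: p x => [//|z p IH] x /= /andP[/and3P[_ zB _] hp].
by rewrite zB (IH z hp).
Qed.

Lemma connect_in (B : {set T}) x y : x \in B -> connect (rel_on B m) x y -> y \in B.
Proof.
move=> xB /connectP[p hp ->].
move: (path_in hp); case/lastP: p hp => [//|p z] _.
by rewrite last_rcons all_rcons => /andP[].
Qed.

Lemma rel_on_mono (B B' : {set T}) : B \subset B' -> subrel (rel_on B m) (rel_on B' m).
Proof.
move=> /subsetP sBB' x y /and3P[xB yB a].
by rewrite /rel_on (sBB' _ xB) (sBB' _ yB).
Qed.

Variable A : {set T}.
Variable lp : T -> rat.
Hypothesis hrep : unit_interval_rep A m lp.
Variable x0 : T.
Hypothesis x0A : x0 \in A.
Let C := Defs.comp A m x0.

Lemma C_sub : C \subset A.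
Proof. by apply/subsetP=> y; rewrite inE; apply: connect_in. Qed.

Lemma C_connect u w : u \in C -> w \in C -> connect (rel_on A m) u w.
Proof.
rewrite !inE => hu hw; apply: connect_trans hw.
by rewrite (sym_connect_sym (@rel_on_sym A)).
Qed.

Lemma step_aux (t : rat) p y : path (rel_on A m) y p -> (lp y <= t)%R ->
  (t < lp (last y p))%R -> exists2 z, z \in y :: p & (t < lp z <= t + 1)%R.
Proof.
elim: p y => [|z p IH] y /=; first by move=> _ h1 h2; have := le_lt_trans h1 h2; rewrite ltxx.
move=> /andP[/and3P[yA zA ayz] hp] hy hl.
case: (leP (lp z) t) => hz.
  by have [z' hz' H] := IH z hp hz hl; exists z' => //; rewrite inE hz' orbT.
exists z; first by rewrite !inE eqxx orbT.
rewrite hz /=.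
have yz : y != z by apply/eqP=> e; move: hz; rewrite -e ltNge hy.
have := (hrep yA zA yz).1 ayz.
rewrite ler_norml => /andP[h1 h2]; lra.
Qed.

Lemma step_exists u w : u \in C -> w \in C -> (lp u < lp w)%R ->
  exists2 z, z \in C & (lp u < lp z <= lp u + 1)%R.
Proof.
move=> uC wC luw.
have /connectP[p hp ew] := C_connect uC wC.
have hl : (lp u < lp (last u p))%R by rewrite -ew.
have [z hz H] := step_aux hp (lexx _) hl.
exists z => //.
rewrite inE; apply: connect_trans (path_connect hp hz).
by move: uC; rewrite inE.
Qed.

Lemma near_case (B : {set T}) u w :
  u \in C -> w \in C -> (lp u <= lp w)%R -> (lp w <= lp u + 1)%R ->
  (forall z, z \in C -> (lp u <= lp z <= lp w)%R -> z \in B) ->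
  exists2 p, path (rel_on B m) u p & last u p = w.
Proof.
move=> uC wC luw hnear hB.
have CA := subsetP C_sub.
case: (eqVneq u w) => [<-|uw]; first by exists [::].
exists [:: w] => //=; rewrite andbT /rel_on (hB u uC) ?lexx ?luw //.
rewrite (hB w wC) ?lexx ?luw //=.
apply/(hrep (CA _ uC) (CA _ wC) uw); rewrite ler_norml; apply/andP; split; lra.
Qed.

Lemma path_exists (B : {set T}) n u w :
  (#|[set z in C | (lp u < lp z <= lp w)%R]| <= n)%N ->
  u \in C -> w \in C -> (lp u <= lp w)%R ->
  (forall z, z \in C -> (lp u <= lp z <= lp w)%R -> z \in B) ->
  exists2 p, path (rel_on B m) u p & last u p = w.
Proof.
have CA := subsetP C_sub.
elim: n u => [|n IH] u hcard uC wC luw hB;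
  (case: (leP (lp w) (lp u + 1)%R) => hnear; first exact: near_case);
  have [z zC /andP[hz1 hz2]] := step_exists uC wC (lt_trans (ltr_pwDr ltr01 (lexx _)) hnear).
- have : z \in [set z in C | (lp u < lp z <= lp w)%R].
    by rewrite inE zC hz1 /=; apply: ltW; apply: le_lt_trans hnear.
  by move=> zin; move: hcard; rewrite leqn0 cards_eq0 => /eqP e; rewrite e inE in zin.
- have hzw : (lp z <= lp w)%R by apply: ltW; apply: le_lt_trans hnear.
  have hc : (#|[set z0 in C | (lp z < lp z0 <= lp w)%R]| <= n)%N.
    rewrite -ltnS; apply: (leq_trans _ hcard).
    apply: proper_card; apply/properP; split.
      apply/subsetP=> y; rewrite !inE => /and3P[-> h1 ->]; rewrite andbT /=.
      exact: lt_trans h1.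
    by exists z; rewrite inE ?zC ?hz1 ?hzw ?ltxx // andbF.
  have hB' : forall y, y \in C -> (lp z <= lp y <= lp w)%R -> y \in B.
    move=> y yC /andP[h1 h2]; apply: (hB y yC); rewrite h2 andbT.
    apply: ltW; exact: lt_le_trans h1.
  have [p hp hl] := IH z hc zC wC hzw hB'.
  exists (z :: p) => //=; rewrite hp andbT.
  have uB : u \in B by apply: (hB u uC); rewrite lexx luw.
  have zB : z \in B by apply: (hB z zC); rewrite hzw (ltW hz1).
  rewrite /rel_on uB zB /=.
  have uz : u != z by apply/eqP=> e; move: hz1; rewrite e ltxx.
  apply/(hrep (CA _ uC) (CA _ zC) uz); rewrite ler_norml; apply/andP; split; lra.
Qed.
End Paths.


Lemma window p (s Y : seq rat) : sorted <%R s -> (size Y <= p)%N ->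
  (5 * p.+1 <= size s)%N ->
  exists i, (i + 4 < size s)%N /\
    forall y, y \in Y -> ~~ ((nth 0 s i <= y)%R && (y <= nth 0 s (i + 4))%R).
Proof.
elim: p s Y => [|p IH] s Y hs hY hsz.
  exists 0%N; split; first lia.
  by case: Y hY.
case hw: (has (fun y => (nth 0 s 0 <= y)%R && (y <= nth 0 s 4)%R) Y); last first.
  exists 0%N; split; first lia.
  by move=> y yY; apply/negP=> hy; move/hasP: hw; apply; exists y.
set P := (fun y => nth 0 s 4 < y)%R.
set Y' := filter P Y.
have hY' : (size Y' <= p)%N.
  have : (size Y' < size Y)%N.
    rewrite size_filter -(count_predC P Y) -addn1 leq_add2l.
    rewrite lt0n -lt0n -has_count.
    move/hasP: hw => [y yY /andP[_ hy]]; apply/hasP; exists y => //=.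
    by rewrite /P -leNgt.
  lia.
have hs' : sorted <%R (drop 5 s) by apply: drop_sorted.
have hsz' : (5 * p.+1 <= size (drop 5 s))%N by rewrite size_drop; lia.
have [i [hi H]] := IH _ _ hs' hY' hsz'.
rewrite size_drop in hi.
exists (5 + i)%N; split; first lia.
move=> y yY; case yY': (y \in Y').
  by have := H y yY'; rewrite !nth_drop addnA.
move: yY'; rewrite mem_filter yY andbT /P => /negbT; rewrite -leNgt => hy.
apply/negP=> /andP[h1 _].
have : (nth 0 s 4 < nth 0 s (5 + i))%R.
  by apply: (sorted_ltn_nth lt_trans) => //; rewrite ?inE /=; lia.
move=> ?; lra.
Qed.

Section Partition.
Variable T : finType.
Variable lp : T -> rat.
Variables (n : nat) (R : {set T}).
Let L := greedy_cliques n lp R.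

Lemma idx_cmp K1 K2 x y : K1 \in L -> K2 \in L -> K1 != K2 -> x \in K1 -> y \in K2 ->
  (lp x < lp y)%R -> (index K1 L < index K2 L)%N.
Proof.
move=> h1 h2 ne hx hy lxy.
have e1 := nth_index set0 h1; have e2 := nth_index set0 h2.
have s1 : (index K1 L < size L)%N by rewrite index_mem.
have s2 : (index K2 L < size L)%N by rewrite index_mem.
case: ltngtP => // h.
  have [] := greedy_ord h s1 (y:=x) (x:=y); rewrite -/L ?e1 ?e2 // => h' _.
  by move: lxy; rewrite ltNge (ltW h').
by move: ne; rewrite -e1 h e2 eqxx.
Qed.

Lemma greedy_disj K1 K2 x : K1 \in L -> K2 \in L -> x \in K1 -> x \in K2 -> K1 = K2.
Proof.
move=> h1 h2 x1 x2; apply/eqP/negPn/negP => ne.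
have e1 := nth_index set0 h1; have e2 := nth_index set0 h2.
have s2 : (index K2 L < size L)%N by rewrite index_mem.
have s1 : (index K1 L < size L)%N by rewrite index_mem.
case: (ltngtP (index K1 L) (index K2 L)) => h.
- have [] := greedy_ord h s2 (x:=x) (y:=x); rewrite -/L ?e1 ?e2 // ltxx //.
- have [] := greedy_ord h s1 (x:=x) (y:=x); rewrite -/L ?e1 ?e2 // ltxx //.
- by move: ne; rewrite -e1 h e2 eqxx.
Qed.

Lemma greedy_spread K1 K2 K3 x y z : K1 \in L -> K2 \in L -> K3 \in L ->
  K1 != K2 -> K2 != K3 -> x \in K1 -> y \in K2 -> z \in K3 ->
  (lp x < lp y)%R -> (lp y < lp z)%R -> (lp x + 1 < lp z)%R.
Proof.
move=> h1 h2 h3 n12 n23 hx hy hz lxy lyz.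
have i12 := idx_cmp h1 h2 n12 hx hy lxy.
have i23 := idx_cmp h2 h3 n23 hy hz lyz.
have e1 := nth_index set0 h1; have e3 := nth_index set0 h3.
have s3 : (index K3 L < size L)%N by rewrite index_mem.
have hx' : x \in nth set0 L (index K1 L) by rewrite e1.
have hz' : z \in nth set0 L (index K3 L) by rewrite e3.
have [_ H] := greedy_ord (ltn_trans i12 i23) s3 hx' hz'.
by apply: H; apply: leq_ltn_trans i23.
Qed.
End Partition.

Lemma claw_rat (a b c t : rat) : (`|t - a| <= 1)%R -> (`|t - b| <= 1)%R -> (`|t - c| <= 1)%R ->
  (1 < `|a - b|)%R -> (1 < `|b - c|)%R -> (1 < `|a - c|)%R -> False.
Proof.
rewrite !ler_norml !ltr_normr => /andP[? ?] /andP[? ?] /andP[? ?].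
case/orP=> ?; case/orP=> ?; case/orP=> ?; lra.
Qed.

Theorem lemma34 (T : finType) (V : {set T}) (m : T -> T -> nat)
  (m_sym : forall x y, m x y = m y x) (m_loopless : forall x, m x x = 0%N)
  (k : int) (S : {set T}) (hSV : S \subset V)
  (hS : propint_tree_graph (V :\: S) m)
  (lp : T -> rat)
  (hrep : unit_interval_rep (cyclic_part (V :\: S) m) m lp)
  (hinj : {in cyclic_part (V :\: S) m &, injective lp})
  (C : {set T}) (hC : is_component (cyclic_part (V :\: S) m) m C)
  (v : T) (hv : v \in S)
  (hdeg : (6 * k + 5 <=
      #|[set K : {set T} | [&& K \in clique_partition lp (cyclic_part (V :\: S) m),
                               K \subset C & [exists u in K, adj m v u]]]|%:Z)%R) :
  PITVD V m k <-> PITVD (V :\ v) m (k - 1)%R.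
Proof.
have vV : v \in V := subsetP hSV v hv.
split; last first.
  move=> [X [hXV hXk hX]].
  exists (v |: X); split.
  - apply/subsetP=> x; rewrite !inE => /orP[/eqP->//|xX].
    by have := subsetP hXV x xX; rewrite !inE => /andP[_ ->].
  - rewrite cardsU1; move: hXk; case: (v \notin X) => /=; lia.
  - have -> : V :\: (v |: X) = (V :\ v) :\: X.
      by apply/setP=> x; rewrite !inE; case: (x == v); case: (x \in X); case: (x \in V).
    exact: hX.
move=> [X [hXV hXk hX]].
case vX: (v \in X).
  exists (X :\ v); split.
  - apply/subsetP=> x; rewrite !inE => /andP[-> xX] /=.
    exact: subsetP hXV x xX.
  - move: hXk; rewrite (cardsD1 v X) vX /=; lia.
  - have -> : (V :\ v) :\: (X :\ v) = V :\: X.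
      apply/setP=> x; rewrite !inE; case: (eqVneq x v) => [->|]; rewrite ?vX ?vV //=.
    exact: hX.
exfalso.
set A := cyclic_part (V :\: S) m in hrep hinj hC hdeg.
have AVS : A \subset V :\: S by apply/subsetP=> x; rewrite inE => /andP[].
case: hC => x0 x0A eC; subst C.
set C := Defs.comp A m x0 in hdeg *.
have CA : C \subset A by exact: C_sub.
have CVS x : x \in C -> x \in V :\: S by move=> xC; apply: (subsetP AVS); apply: (subsetP CA).
have vC : v \notin C by apply/negP=> /CVS; rewrite inE hv.
set L := clique_partition lp A in hdeg.
set H := [set K : {set T} | _] in hdeg.
pose f (K : {set T}) := odflt v [pick u in K | adj m v u].
have hf K : K \in H -> [/\ f K \in K, adj m v (f K), K \in L & K \subset C].
  rewrite inE => /and3P[KL KC /existsP[u /andP[uK au]]].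
  rewrite /f; case: pickP => [u' /andP[u'K au']|/(_ u)] //=; last by rewrite uK au.
have finj : {in H &, injective f}.
  move=> K1 K2 h1 h2 e.
  have [f1 _ L1 _] := hf _ h1; have [f2 _ L2 _] := hf _ h2.
  by apply: (greedy_disj L1 L2 f1); rewrite e.
set F := f @: H.
have cardF : #|F| = #|H| := card_in_imset finj.
have FC x : x \in F -> x \in C /\ adj m v x.
  by move=> /imsetP[K hK ->]; have [? ? _ KC] := hf _ hK; split => //; apply: (subsetP KC).
have Fspread x y z : x \in F -> y \in F -> z \in F -> (lp x < lp y)%R -> (lp y < lp z)%R ->
    (lp x + 1 < lp z)%R.
  move=> /imsetP[K1 h1 ->] /imsetP[K2 h2 ->] /imsetP[K3 h3 ->] lxy lyz.
  have [a1 _ L1 _] := hf _ h1; have [a2 _ L2 _] := hf _ h2; have [a3 _ L3 _] := hf _ h3.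
  apply: (greedy_spread L1 L2 L3 _ _ a1 a2 a3 lxy lyz).
    by apply/eqP=> e; move: lxy; rewrite e ltxx.
  by apply/eqP=> e; move: lyz; rewrite e ltxx.
pose le_lp := fun x y => (lp x <= lp y)%R.
set sv := sort le_lp (enum F).
have svF x : (x \in sv) = (x \in F) by rewrite mem_sort mem_enum.
have sv_uniq : uniq sv by rewrite sort_uniq enum_uniq.
have sv_size : size sv = #|F| by rewrite size_sort cardE.
have hlpF : {in sv &, injective lp}.
  move=> x y; rewrite !svF => /FC[xC _] /FC[yC _]; apply: hinj; exact: (subsetP CA).
set ls := map lp sv.
have ls_sorted : sorted <%R ls.
  rewrite lt_sorted_uniq_le map_inj_in_uniq // sv_uniq /= sorted_map.
  exact: (sort_sorted (fun x y => le_total (lp x) (lp y))).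
set Y := map lp (enum (X :&: C)).
have hY : (size Y <= #|X|)%N.
  by rewrite size_map -cardE; apply: subset_leq_card; apply: subsetIl.
have hsz : (5 * (#|X|).+1 <= size ls)%N.
  rewrite size_map sv_size cardF; lia.
have [i [hi hwin]] := window ls_sorted hY hsz.
rewrite size_map in hi.
pose w j := nth v sv (i + j).
have hij j : (j <= 4)%N -> (i + j < size sv)%N.
  by move=> hj; apply: (leq_trans _ hi); rewrite ltnS leq_add2l.
have wF j : (j <= 4)%N -> w j \in F by move=> hj; rewrite -svF mem_nth // hij.
have lsw j : (j <= 4)%N -> nth 0%R ls (i + j) = lp (w j) by move=> hj; rewrite (nth_map v) // hij.
have lpw j1 j2 : (j1 < j2)%N -> (j2 <= 4)%N -> (lp (w j1) < lp (w j2))%R.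
  move=> h12 h2; rewrite -lsw ?(ltnW (leq_trans h12 h2)) // -lsw //.
  apply: (sorted_ltn_nth lt_trans) => //; rewrite ?inE ?size_map ?hij ?ltn_add2l //.
  exact: ltnW (leq_trans h12 h2).
have notX z : z \in C -> (lp (w 0) <= lp z <= lp (w 4))%R -> z \notin X.
  move=> zC hz; apply/negP=> zX.
  have : lp z \in Y by apply: map_f; rewrite mem_enum inE zX zC.
  by move/hwin; rewrite -{1}(addn0 i) !lsw // hz.
set a := w 0; set b := w 2; set c := w 4.
have [aC va] := FC a (wF 0 isT).
have [bC vb] := FC b (wF 2 isT).
have [cC vc] := FC c (wF 4 isT).
have lab : (lp a + 1 < lp b)%R := Fspread _ _ _ (wF 0 isT) (wF 1 isT) (wF 2 isT) (lpw 0 1 isT isT) (lpw 1 2 isT isT).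
have lbc : (lp b + 1 < lp c)%R := Fspread _ _ _ (wF 2 isT) (wF 3 isT) (wF 4 isT) (lpw 2 3 isT isT) (lpw 3 4 isT isT).
have lac : (lp a + 1 < lp c)%R by lra.
have nonadj x y : x \in C -> y \in C -> (lp x + 1 < lp y)%R -> x != y /\ ~~ adj m x y.
  move=> xC yC lxy.
  have xy : x != y by apply/eqP=> e; move: lxy; rewrite e; lra.
  split=> //; apply/negP=> /(hrep x y (subsetP CA _ xC) (subsetP CA _ yC) xy).
  rewrite ler_norml => /andP[h1 h2]; clear -lxy h1; lra.
have [ab nab] := nonadj a b aC bC lab.
have [bc nbc] := nonadj b c bC cC lbc.
have [ac nac] := nonadj a c aC cC lac.
have aX : a \notin X by apply: notX aC _; rewrite lexx ltW //; lra.
have bX : b \notin X by apply: notX bC _; apply/andP; split; apply: ltW; lra.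
have cX : c \notin X by apply: notX cC _; rewrite lexx andbT ltW //; lra.
set D := Defs.comp (V :\: X) m v.
have vVX : v \in V :\: X by rewrite inE vX vV.
have CVX z : z \in C -> z \notin X -> z \in V :\: X.
  by move=> zC zX; move: (CVS z zC); rewrite !inE zX => /andP[_ ->].
have DinC z : z \in C -> adj m v z -> z \notin X -> z \in D.
  move=> zC az zX; rewrite inE; apply: connect1.
  by rewrite /rel_on vVX (CVX z zC zX).
have vD : v \in D by rewrite inE connect0.
have aD := DinC a aC va aX.
have bD := DinC b bC vb bX.
have cD := DinC c cC vc cX.
have nvC z : z \in C -> v != z by move=> zC; apply/eqP=> e; move: vC; rewrite e zC.
have [_ hcomp] := hX.
case: (hcomp D (ex_intro2 _ _ v vVX erefl)) => [[lp' hrep'] | [_ [_ hnc]]].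
  have adjD x y : x \in D -> y \in D -> x != y -> adj m x y -> (`|lp' x - lp' y| <= 1)%R.
    by move=> xD yD xy; move/(hrep' x y xD yD xy).
  have nadjD x y : x \in D -> y \in D -> x != y -> ~~ adj m x y -> (1 < `|lp' x - lp' y|)%R.
    move=> xD yD xy /negP na; rewrite ltNge; apply/negP=> h; apply: na.
    exact/(hrep' x y xD yD xy).
  apply: (claw_rat (t := lp' v)).
  - exact: adjD vD aD (nvC _ aC) va.
  - exact: adjD vD bD (nvC _ bC) vb.
  - exact: adjD vD cD (nvC _ cC) vc.
  - exact: nadjD aD bD ab nab.
  - exact: nadjD bD cD bc nbc.
  - exact: nadjD aD cD ac nac.
apply: hnc.
set B := C :\: X.
have hB z : z \in C -> (lp a <= lp z <= lp b)%R -> z \in B.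
  move=> zC /andP[h1 h2]; rewrite inE zC andbT; apply: notX zC _.
  by apply/andP; split => //; apply: (le_trans h2); apply: ltW; lra.
have [p hp hl] := path_exists m_sym hrep x0A (max_card _) aC bC (ltW (lt_trans (ltr_pwDr ltr01 (lexx _)) lab)) hB.
case: {hp} (shortenP hp) hl => p' hp' uq _ hl.
have BVX : B \subset V :\: X.
  by apply/subsetP=> z; rewrite inE => /andP[zX zC]; apply: CVX.
have aB : a \in B by rewrite inE aX aC.
have allB : all (fun z => z \in B) (a :: p') by rewrite /= aB (path_in hp').
exists [:: v, a & p']; split.
- case: p' {hp' uq allB} hl => [/= e|//]; first by move: ab; rewrite e eqxx.
- rewrite cons_uniq uq andbT; apply/negP=> vin.
  have := allP allB v vin; rewrite inE => /andP[_ vC']; by move: vC; rewrite vC'.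
- apply/allP=> z; rewrite inE => /orP[/eqP->|zin]; first exact: vD.
  rewrite inE; apply: connect_trans (connect1 _) (path_connect (sub_path (rel_on_mono BVX) hp') zin).
  by rewrite /rel_on vVX (CVX a aC aX).
- rewrite /= rcons_path /= hl; apply/and3P; split => //.
  + by apply: sub_path hp' => x y /and3P[].
  + by rewrite /adj m_sym.
Qed.
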